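(* Let $(Q,\cdot)$ be a magma and $e\in Q$. Then $(Q,\cdot,e)$ is a double Ward quasigroup if and only if $(Q,\cdot)$ is cancellative and satisfies $(ee\cdot xz)(ey\cdot z)=xy$ for all $x,y,z\in Q$.
   Context: A quasigroup is a magma in which $ax=b$ and $ya=b$ have unique solutions for all $a,b$. A double Ward quasigroup $(Q,\cdot,e)$ is a quasigroup with an element $e$ such that $(ee\cdot xz)(ey\cdot z)=xy$ for all $x,y,z$. A magma is cancellative if $ax=ay$ implies $x=y$ and $xa=ya$ implies $x=y$. *)

(* Defs.v *)
Definition is_quasigroup {Q : Type} (mul : Q -> Q -> Q) : Prop :=
  (forall a b : Q, exists x : Q, mul a x = b /\ forall x', mul a x' = b -> x' = x) /\
  (forall a b : Q, exists y : Q, mul y a = b /\ forall y', mul y' a = b -> y' = y).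

Definition double_ward_identity {Q : Type} (mul : Q -> Q -> Q) (e : Q) : Prop :=
  forall x y z : Q, mul (mul (mul e e) (mul x z)) (mul (mul e y) z) = mul x y.

Definition double_ward_quasigroup {Q : Type} (mul : Q -> Q -> Q) (e : Q) : Prop :=
  is_quasigroup mul /\ double_ward_identity mul e.

Definition cancellative {Q : Type} (mul : Q -> Q -> Q) : Prop :=
  (forall a x y : Q, mul a x = mul a y -> x = y) /\
  (forall a x y : Q, mul x a = mul y a -> x = y).

(* Main.v *)
Require Import Defs.

Theorem theorem4p11 (Q : Type) (mul : Q -> Q -> Q) (e : Q) :
  double_ward_quasigroup mul e <-> (cancellative mul /\ double_ward_identity mul e).
Proof.
  split.
  - intros [[HL HR] HA]. split; [split|exact HA].
    + intros a x y H. destruct (HL a (mul a x)) as [s [_ Hs]].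
      rewrite (Hs x eq_refl), (Hs y (eq_sym H)). reflexivity.
    + intros a x y H. destruct (HR a (mul x a)) as [s [_ Hs]].
      rewrite (Hs x eq_refl), (Hs y (eq_sym H)). reflexivity.
  - intros [[CL CR] A]. pose proof A as A0. unfold double_ward_identity in A.
    assert (Hf : mul e e = e).
    { pose proof (A (mul (mul e e) (mul e e)) (mul (mul e e) e) (mul (mul e e) e)) as H1.
      pose proof (A e e e) as H3.
      rewrite H3 in H1. pose proof (eq_trans H1 (eq_sym H3)) as H5.
      apply CL in H5. clear H1. rename H5 into H1.
      pose proof (A (mul e e) e e) as H4.
      pose proof (eq_trans H4 (eq_sym H1)) as H6.
      apply CR in H6. apply CR in H6. exact H6. }
    rewrite Hf in A.
    assert (E6 : forall x, mul (mul e (mul x e)) e = mul x e).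
    { intro x. pose proof (A x e e) as H. rewrite !Hf in H. exact H. }
    assert (E7 : forall x, mul e (mul x e) = x).
    { intro x. pose proof (A (mul e (mul x e)) x e) as H.
      rewrite E6, (A x x e) in H. symmetry. exact (CR _ _ _ H). }
    assert (E8 : forall y, mul (mul e y) e = y).
    { intro y. pose proof (A e y e) as H. rewrite E7 in H.
      exact (CL _ _ _ H). }
    assert (F2 : forall x z, mul (mul e (mul e z)) (mul x z) = x).
    { intros x z. pose proof (A e (mul x e) z) as H. rewrite !E7 in H. exact H. }
    assert (G : forall x z, mul (mul e (mul (mul e x) z)) (mul e z) = x).
    { intros x z. pose proof (A (mul e x) e z) as H. rewrite !Hf, E8 in H. exact H. }
    split; [split|exact A0].
    + intros a b. exists (mul b (mul (mul a e) e)). split.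
      * pose proof (F2 b (mul (mul a e) e)) as H. rewrite !E7 in H. exact H.
      * intros x' Hx'. apply (CL a).
        pose proof (F2 b (mul (mul a e) e)) as H. rewrite !E7 in H. congruence.
    + intros a b. exists (mul e (mul (mul e b) (mul a e))). split.
      * pose proof (G b (mul a e)) as H. rewrite E7 in H. exact H.
      * intros y' Hy'. apply (CR a).
        pose proof (G b (mul a e)) as H. rewrite E7 in H. congruence.
Qed.
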